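(* Let $r\ge2$, $n\ge2r$, and let $H\subseteq\binom{\Omega_n}{r}$ be $M_1^{(r)}$-saturated. Then: (1) for all $i$, $\rho(v_{i+1})=\lambda(v_i)$; (2) for all distinct $v_i,v_j$, $|[\rho(v_i),\lambda(v_i)]\cap[\rho(v_j),\lambda(v_j)]|\le1$; (3) for every $j$, there is exactly one vertex $v_i$ such that the interval $[\rho(v_i),\lambda(v_i)]$ contains both $v_j$ and $v_{j+1}$; (4) if $\lambda(v_i)\neq\rho(v_i)$, then $\lambda(\rho(v_i))=v_i$ and $\rho(\rho(v_i))\in[\lambda(v_i),v_i)$.
   Context: $\Omega_n=\{v_0,\dots,v_{n-1}\}$ with cyclic order $v_0<\dots<v_{n-1}<v_0$, indices mod $n$. For distinct vertices $u,w$, $(u,w)$ is the set of vertices strictly between $u$ and $w$ moving clockwise from $u$ to $w$; $[u,w]=(u,w)\cup\{u,w\}$, $[u,w)=(u,w)\cup\{u\}$; $[u,u]=\{u\}$. An $r$-cgh $H\subseteq\binom{\Omega_n}{r}$ is $M_1^{(r)}$-saturated if there are no edges $h_1,h_2\in H$ and vertices $u\neq u'$ with $h_1\subseteq[u,u']$ and $h_2\cap[u,u']=\emptyset$, but for every $e\in\binom{\Omega_n}{r}\setminus H$ such a pair exists in $H\cup\{e\}$. In such $H$ every vertex lies in an edge. $\lambda(v_i)$ is the vertex $u$ such that some $h\in H$ with $v_i\in h$ satisfies $h\subseteq[u,v_i]$, while no $h\in H$ with $v_i\in h$ satisfies $h\subseteq[u',v_i]$, $u'$ the clockwise successor of $u$.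 $\rho(v_i)$ is the vertex $u$ such that some $h\in H$ with $v_i\in h$ satisfies $h\subseteq[v_i,u]$ but none with $h\subseteq[v_i,u'']$, $u''$ the clockwise predecessor of $u$. *)

(* Defs.v *)
From mathcomp Require Import all_boot.
Set Implicit Arguments. Unset Strict Implicit. Unset Printing Implicit Defensive.

(* Vertices of Omega_n are the ordinals 'I_n, v_i = i, cyclic order 0<1<..<n-1<0. *)
Section Cyclic.
Variable n : nat.

Definition cdist (u x : 'I_n) : nat := (x + n - u) %% n.

(* closed clockwise interval [u,w]; [u,u] = {u} *)
Definition cint (u w : 'I_n) : {set 'I_n} := [set x | cdist u x <= cdist u w].

(* half-open clockwise interval [u,w) = [u,w] \ {w} for u <> w *)
Definition hoint (u w : 'I_n) : {set 'I_n} := [set x | cdist u x < cdist u w].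

Definition uniform (r : nat) (H : {set {set 'I_n}}) : Prop :=
  forall h, h \in H -> #|h| = r.

(* H contains a copy of M_1^{(r)}: h1 in [u,u'], h2 disjoint from [u,u'] *)
Definition has_M1 (H : {set {set 'I_n}}) : Prop :=
  exists h1 h2 u u', [/\ h1 \in H, h2 \in H, u != u',
                        h1 \subset cint u u' & [disjoint h2 & cint u u']].

Definition M1_saturated (r : nat) (H : {set {set 'I_n}}) : Prop :=
  uniform r H /\ ~ has_M1 H /\
  (forall e : {set 'I_n}, #|e| = r -> e \notin H -> has_M1 (e |: H)).

Definition is_lambda (H : {set {set 'I_n}}) (v u : 'I_n) : bool :=
  [exists h in H, (v \in h) && (h \subset cint u v)] &&
  ~~ [exists h in H, (v \in h) && (h \subset cint (ordS u) v)].

Definition is_rho (H : {set {set 'I_n}}) (v u : 'I_n) : bool :=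
  [exists h in H, (v \in h) && (h \subset cint v u)] &&
  ~~ [exists h in H, (v \in h) && (h \subset cint v (ord_pred u))].

(* "the vertex u" with the property (default v if none exists) *)
Definition lam (H : {set {set 'I_n}}) (v : 'I_n) : 'I_n :=
  odflt v [pick u | is_lambda H v u].
Definition rho (H : {set {set 'I_n}}) (v : 'I_n) : 'I_n :=
  odflt v [pick u | is_rho H v u].

End Cyclic.

(* Main.v *)
Require Import Defs.
From mathcomp Require Import all_boot.
From mathcomp Require Import zify.
Set Implicit Arguments. Unset Strict Implicit. Unset Printing Implicit Defensive.


Lemma ordeqE n (x y : 'I_n) : (x == y) = (nat_of_ord x == nat_of_ord y). Proof. by []. Qed.
Section Arith.
Variable n : nat.
Implicit Types a b c x y : 'I_n.

Lemma cdistE a c : (a <= c -> cdist a c = c - a) /\ (c < a -> cdist a c = n + c - a).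
Proof.
rewrite /cdist; have ha := ltn_ord a; have hc := ltn_ord c; split=> h.
  have -> : c + n - a = (c - a) + n by lia.
  by rewrite modnDr modn_small; lia.
by rewrite modn_small; lia.
Qed.

Lemma ordSE x : (x.+1 < n -> ordS x = x.+1 :> nat) /\ (x.+1 = n -> ordS x = 0 :> nat).
Proof.
rewrite /=; split=> h; first by rewrite modn_small.
by rewrite h modnn.
Qed.

Lemma ord_predE x : (0 < x -> ord_pred x = x.-1 :> nat) /\ (x = 0 :> nat -> ord_pred x = n.-1 :> nat).
Proof.
have hx := ltn_ord x.
rewrite /=; split=> h.
  have -> : (x + n).-1 = x.-1 + n by lia.
  by rewrite modnDr modn_small; lia.
by rewrite h add0n modn_small; lia.
Qed.

Lemma cdist_le a c : a <= c -> cdist a c = c - a. Proof. by move=> h; case: (cdistE a c) => H _; apply: H. Qed.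
Lemma cdist_gt a c : c < a -> cdist a c = n + c - a. Proof. by move=> h; case: (cdistE a c) => _ H; apply: H. Qed.
Lemma ordS_lt x : x.+1 < n -> ordS x = x.+1 :> nat. Proof. by move=> h; case: (ordSE x) => H _; apply: H. Qed.
Lemma ordS_eq x : n <= x.+1 -> ordS x = 0 :> nat.
Proof. have := ltn_ord x => h1 h2; case: (ordSE x) => _ H; apply: H; lia. Qed.
Lemma ord_pred_gt x : 0 < x -> ord_pred x = x.-1 :> nat. Proof. by move=> h; case: (ord_predE x) => H _; apply: H. Qed.
Lemma ord_pred_0 x : x <= 0 -> ord_pred x = n.-1 :> nat. Proof. move=> h; case: (ord_predE x) => _ H; apply: H; lia. Qed.
Lemma in_cint a b x : (x \in cint a b) = (cdist a x <= cdist a b).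
Proof. by rewrite inE. Qed.
Lemma in_hoint a b x : (x \in hoint a b) = (cdist a x < cdist a b).
Proof. by rewrite inE. Qed.

End Arith.

Ltac cd_gen :=
  repeat match goal with
  | |- context [cdist ?a ?b] =>
      let h := fresh in
      case: (leqP a b) => h; [move: (cdist_le h) | move: (cdist_gt h)]; move: h;
      generalize (cdist a b); intros ?
  end;
  repeat match goal with
  | |- context [nat_of_ord (ordS ?a)] =>
      let h := fresh in
      lazymatch type of a with ordinal ?m => case: (ltnP a.+1 m) => h end; [move: (ordS_lt h) | move: (ordS_eq h)]; move: h;
      generalize (nat_of_ord (ordS a)); intros ?
  | |- context [nat_of_ord (ord_pred ?a)] =>
      let h := fresh in
      case: (posnP a) => h; [move: (ord_pred_0 (eq_leq h)) | move: (ord_pred_gt h)]; move: h;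
      generalize (nat_of_ord (ord_pred a)); intros ?
  end.
Ltac ord_gen := repeat match goal with |- context [nat_of_ord ?x] =>
  move: (ltn_ord x); generalize (nat_of_ord x); intros ? end.
Ltac arith := rewrite ?in_cint ?in_hoint; cd_gen; ord_gen; intros; lia.

Section Base.
Variable n : nat.
Implicit Types a b c p x y : 'I_n.
Lemma cb_le p a b : cdist p a <= cdist p b -> cdist a b = cdist p b - cdist p a.
Proof. arith. Qed.
Lemma cb_gt p a b : cdist p b < cdist p a -> cdist a b = n + cdist p b - cdist p a.
Proof. arith. Qed.
Lemma cbS_lt p x : (cdist p x).+1 < n -> cdist p (ordS x) = (cdist p x).+1.
Proof. arith. Qed.
Lemma cbS_eq p x : n <= (cdist p x).+1 -> cdist p (ordS x) = 0.
Proof. arith. Qed.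
Lemma cbP_gt p x : 0 < cdist p x -> cdist p (ord_pred x) = (cdist p x).-1.
Proof. arith. Qed.
Lemma cbP_0 p x : cdist p x <= 0 -> cdist p (ord_pred x) = n.-1.
Proof. arith. Qed.
Lemma cdist_ltn p x : cdist p x < n.
Proof. arith. Qed.
Lemma cdist_inj p x y : cdist p x = cdist p y -> x = y.
Proof. move=> h; apply: val_inj; rewrite /=; move: h; arith. Qed.
Lemma cdist_eqE p x y : (x == y) = (cdist p x == cdist p y).
Proof. apply/eqP/eqP=> [->//|]; exact: cdist_inj. Qed.
Lemma cdist0 p : cdist p p = 0.
Proof. arith. Qed.
End Base.

Ltac base p :=
  rewrite ?in_cint ?in_hoint ?(cdist_eqE p);
  repeat match goal with
  | |- context [cdist ?a ?b] =>
      tryif constr_eq a p then fail else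
      let h := fresh in
      case: (leqP (cdist p a) (cdist p b)) => h;
        [move: (cb_le h) | move: (cb_gt h)]; move: h;
      generalize (cdist a b); intros ?
  end;
  repeat match goal with
  | |- context [cdist p (ordS ?x)] =>
      let h := fresh in
      lazymatch type of x with ordinal ?m =>
      case: (ltnP (cdist p x).+1 m) => h end;
        [move: (cbS_lt h) | move: (cbS_eq h)]; move: h;
      generalize (cdist p (ordS x)); intros ?
  | |- context [cdist p (ord_pred ?x)] =>
      let h := fresh in
      case: (posnP (cdist p x)) => h;
        [move: (cbP_0 (eq_leq h)) | move: (cbP_gt h)]; move: h;
      generalize (cdist p (ord_pred x)); intros ?
  end;
  rewrite ?cdist0;
  repeat match goal with
  | |- context [cdist p ?x] => move: (cdist_ltn p x); generalize (cdist p x); intros ?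
  end;
  intros; lia.


Section Geo.
Variable n : nat.
Implicit Types a b c d p q u v x y z i j l : 'I_n.

Lemma AL_in p q c d x : c \notin cint p q -> d \notin cint p q -> p \in cint c d ->
  x \in cint p q -> x \in cint c d.
Proof. rewrite !in_cint -!ltnNge. base p. Qed.
Lemma AL_out p q c d x : c \notin cint p q -> d \notin cint p q -> p \notin cint c d ->
  x \in cint p q -> x \notin cint c d.
Proof. rewrite !in_cint -!ltnNge. base p. Qed.
Lemma COMPL a b : ordS b != a -> ~: cint a b = cint (ordS b) (ord_pred a).
Proof. move=> h; apply/setP=> x; rewrite !inE. apply/idP/idP; move: h; base a. Qed.
Lemma cint_full a b : ordS b = a -> cint a b = setT.
Proof. move=> h; apply/setP=> x; rewrite !inE; move/eqP: h; base a. Qed.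
Lemma cint_id a : cint a a = [set a].
Proof. apply/setP=> x; rewrite !inE. apply/idP/idP; base a. Qed.
Lemma cint_l a b : a \in cint a b. Proof. base a. Qed.
Lemma cint_r a b : b \in cint a b. Proof. base a. Qed.
Lemma G1 u v x : x \in cint u v -> x \notin cint (ordS u) v -> x == u.
Proof. base u. Qed.
Lemma G2 u v x : x \in cint u v -> x != u -> x \in cint (ordS u) v.
Proof. base u. Qed.
Lemma G1' v u x : x \in cint v u -> x \notin cint v (ord_pred u) -> x == u.
Proof. base v. Qed.
Lemma G2' v u x : x \in cint v u -> x != u -> x \in cint v (ord_pred u).
Proof. base v. Qed.
Lemma G3 a b v x : cdist a v < cdist b v -> x \in cint a v -> x \in cint (ordS b) v.
Proof. base b. Qed.
Lemma G3' v a b x : cdist v a < cdist v b -> x \in cint v a -> x \in cint v (ord_pred b).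
Proof. base v. Qed.
Lemma G4 u' u v : cdist u' v = cdist u v -> u' == u.
Proof. base u. Qed.
Lemma G5 l a v x : l \in cint a v -> x \in cint l v -> x \in cint a v.
Proof. base a. Qed.
Lemma G6 l a v x : l \notin cint a v -> x \in cint a v -> x \in cint (ordS l) v.
Proof. base a. Qed.
Lemma G7 p i x : p != i -> x \in cint p (ord_pred i) -> x \in cint p i.
Proof. base p. Qed.
Lemma GU p q i j : q \in cint p i -> q != i -> p != i -> p != ord_pred i ->
  j \in cint p q -> ordS j \in cint p q ->
  (q \in cint (ordS j) i) && (p \notin cint (ordS j) (ord_pred i)).
Proof. base p. Qed.
Lemma GU2 p q i z : q \in cint p i -> q != i -> z \in cint p q -> z != q -> ordS z \in cint p q.
Proof. base p. Qed.
Lemma GE p q i j : q \in cint p i -> q \in cint (ordS j) i -> p \notin cint (ordS j) (ord_pred i) ->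
  i != j -> i != ordS j -> p != i -> p != ord_pred i -> (j \in cint p q) && (ordS j \in cint p q).
Proof. base p. Qed.
Lemma G9 p q i y : q \in cint p i -> q != p -> p != i -> y \in cint q i -> y \in cint q (ord_pred p).
Proof. base p. Qed.
Lemma G10 p q i x : q \in cint p i -> q != p -> p != i -> q != i ->
  x \in cint q (ord_pred p) -> x \notin cint i (ord_pred p) -> x \in hoint q i.
Proof. base p. Qed.
Lemma G11 a b c d x y : x \in cint a b -> x \in cint c d -> y \in cint a b -> y \in cint c d ->
  x != y -> (x == b) || (x == d) -> (y == b) || (y == d) ->
  (a \in cint c d -> a == d) -> (c \in cint a b -> c == b) -> (a == d) && (c == b).
Proof. base a. Qed.
Lemma G12 a b z : a != b -> (z \in cint a b) && (z != b) || (z \in cint b a) && (z != a).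
Proof. base a. Qed.
Lemma ordS_neq x : 1 < n -> ordS x != x.
Proof. base x. Qed.
End Geo.


Lemma ivt (f : nat -> bool) N : f 0 -> ~~ f N -> exists t, f t && ~~ f t.+1.
Proof.
move=> f0; elim: N => [|N IH] fN; first by rewrite f0 in fN.
case: (boolP (f N)) => h; first by exists N; rewrite h.
exact: IH.
Qed.

Lemma iter_ordS n (x : 'I_n) t : nat_of_ord (iter t (@ordS n) x) = (x + t) %% n.
Proof.
elim: t => [|t IH]; first by rewrite addn0 modn_small.
by rewrite iterS /= IH -[((_ %% n).+1)]addn1 modnDml addn1 addnS.
Qed.

Lemma oSK n (x : 'I_n) : ord_pred (ordS x) = x. Proof. exact: ordSK. Qed.
Lemma oPK n (x : 'I_n) : ordS (ord_pred x) = x. Proof. exact: ord_predK. Qed.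
Section Sat.
Variables (n r : nat) (H : {set {set 'I_n}}).
Hypotheses (r2 : 2 <= r) (rn : 2 * r <= n) (sat : M1_saturated r H).
Implicit Types a b c d p q u v x y z i j l : 'I_n.
Implicit Types e h : {set 'I_n}.

Definition hv (S : {set 'I_n}) := [exists h in H, h \subset S].

Lemma hvP (S : {set 'I_n}) : reflect (exists2 h, h \in H & h \subset S) (hv S).
Proof. by apply: (iffP exists_inP) => [[h ? ?]|[h ? ?]]; exists h. Qed.

Lemma hv_sub (S T : {set 'I_n}) : hv S -> S \subset T -> hv T.
Proof. move=> /hvP[h hH hS] ST; apply/hvP; exists h => //; exact: subset_trans hS ST. Qed.

Lemma card_e h : h \in H -> #|h| = r.
Proof. by case: sat => u _; apply: u. Qed.

Lemma not_sub1 h a : h \in H -> ~~ (h \subset [set a]).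
Proof. move=> hH; apply/negP => /subset_leq_card; rewrite cards1 card_e //; lia. Qed.

Lemma not_sub0 h : h \in H -> ~~ (h \subset set0).
Proof. move=> hH; apply/negP => /subset_leq_card; rewrite cards0 card_e //; lia. Qed.

Lemma hv1 a : ~~ hv (cint a a).
Proof. by rewrite cint_id; apply/negP => /hvP[h hH]; apply/negP; exact: not_sub1. Qed.

Lemma hv0 : ~~ hv set0.
Proof. by apply/negP => /hvP[h hH]; apply/negP; exact: not_sub0. Qed.

Lemma M1F h1 h2 p q : h1 \in H -> h2 \in H -> h1 \subset cint p q ->
  [disjoint h2 & cint p q] -> False.
Proof.
case: sat => _ [nM1 _] h1H h2H s1 d2; apply: nM1; exists h1, h2, p, q; split => //.
apply/negP => /eqP epq; move: s1; rewrite epq cint_id; apply/negP; exact: not_sub1.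
Qed.

Lemma sat_arc e : #|e| = r -> e \notin H ->
  exists p q h, [/\ h \in H, h \subset cint p q & [disjoint e & cint p q]].
Proof.
case: sat => _ [nM1 satH] he eH.
have [h1 [h2 [u [u' [h1H h2H uu' s1 d2]]]]] := satH e he eH.
move: h1H h2H; rewrite !in_setU1 => /orP[/eqP e1|h1H] /orP[/eqP e2|h2H].
- subst h1 h2; have : 0 < #|e| by rewrite he; lia.
  case/card_gt0P => x xe; move: d2; rewrite disjoints_subset => /subsetP/(_ x xe).
  by rewrite inE (subsetP s1 x xe).
- subst h1; move: d2; rewrite disjoints_subset => d2.
  case: (eqVneq (ordS u') u) => eu.
    by move: d2; rewrite cint_full // setCT => d2; case/negP: (not_sub0 h2H).
  exists (ordS u'), (ord_pred u), h2; split => //.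
    by rewrite -COMPL.
  by rewrite disjoints_subset -COMPL // setCK.
- subst h2; exists u, u', h1; split => //.
- by case: nM1; exists h1, h2, u, u'.
Qed.

Lemma NL c d : r <= #|cint c d| -> hv (cint c d) || hv (~: cint c d).
Proof.
move=> hc; apply/negPn/negP; rewrite negb_or => /andP[l1 l2].
have cd : c != d.
  by apply/negP => /eqP ecd; move: hc; rewrite ecd cint_id cards1; lia.
have cin := cint_l c d; have din := cint_r c d.
set S := cint c d :\ c :\ d.
have hS : r - 2 <= #|S|.
  have h2 : r <= 1 + (1 + #|S|).
    move: hc; rewrite (cardsD1 c (cint c d)) cin (cardsD1 d (cint c d :\ c)) in_setD1 din eq_sym cd /=.
    by rewrite -/S.
  lia.
have [s [us ss sub]] := card_geqP hS.
set T := [set x in s].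
have cT : #|T| = r - 2 by rewrite cardsE (card_uniqP us).
have TS : T \subset S by apply/subsetP => x; rewrite inE; exact: sub.
set e := c |: (d |: T).
have cT' : c \notin T by apply/negP => /(subsetP TS); rewrite !inE eqxx andbF.
have dT' : d \notin T by apply/negP => /(subsetP TS); rewrite !inE eqxx.
have ce : #|e| = r.
  rewrite cardsU1 in_setU1 negb_or cd cT' cardsU1 dT' cT /=; lia.
have ecd : e \subset cint c d.
  apply/subsetP => x; rewrite !in_setU1 => /orP[/eqP->//|/orP[/eqP->//|xT]].
  by move: (subsetP TS x xT); rewrite !in_setD1 => /andP[_ /andP[_]].
have eH : e \notin H.
  by apply/negP => eH; case/negP: l1; apply/hvP; exists e.
have [p [q [h [hH hpq dis]]]] := sat_arc ce eH.
have cn : c \notin cint p q.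
  by move: dis; rewrite disjoints_subset => /subsetP/(_ c); rewrite !inE eqxx /=; apply.
have dn : d \notin cint p q.
  by move: dis; rewrite disjoints_subset => /subsetP/(_ d); rewrite !inE eqxx orbT /=; apply.
case: (boolP (p \in cint c d)) => pin.
- case/negP: l1; apply: (hv_sub (S := cint p q)); first by apply/hvP; exists h.
  by apply/subsetP => x; exact: AL_in.
- case/negP: l2; apply: (hv_sub (S := cint p q)); first by apply/hvP; exists h.
  by apply/subsetP => x xin; rewrite inE; exact: AL_out xin.
Qed.

Lemma dich a b : ordS b != a -> hv (cint a b) = ~~ hv (cint (ordS b) (ord_pred a)).
Proof.
move=> ne; rewrite -COMPL //.
case: (boolP (hv (cint a b))) => [/hvP[h1 h1H s1]|l].
  apply/esym/negP => /hvP[h2 h2H s2]; apply: (M1F h1H h2H s1).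
  by rewrite disjoints_subset.
suff hh : hv (~: cint a b) by rewrite hh.
have := cardsC (cint a b); rewrite card_ord => hc.
case: (leqP r #|cint a b|) => hr.
  by case/orP: (NL hr) => hh //; rewrite hh in l.
have hr' : r <= #|cint (ordS b) (ord_pred a)| by rewrite -COMPL //; lia.
case/orP: (NL hr') => hh; last by move: hh; rewrite -COMPL // setCK => hh; rewrite hh in l.
by move: hh; rewrite -COMPL.
Qed.

Lemma swap_e h x z a b : h \in H -> h \subset cint a b -> x \in h -> z \notin h ->
  z \in cint a b -> exists e, [/\ #|e| = r, x \in e, z \in e & e \subset cint a b].
Proof.
move=> hH hab xh zh zab.
have : 1 < #|h| by rewrite card_e.
move/card_gt1P => [y1 [y2 [y1h y2h y12]]].
have [y yh yx] : exists2 y, y \in h & y != x.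
  case: (eqVneq y1 x) => e1; last by exists y1.
  by exists y2 => //; rewrite -e1 eq_sym.
exists (z |: (h :\ y)); split.
- rewrite cardsU1 in_setD1 (negbTE zh) andbF /=; have := cardsD1 y h; rewrite yh card_e //; lia.
- by rewrite in_setU1 in_setD1 xh andbT; apply/orP; right; rewrite eq_sym.
- by rewrite in_setU1 eqxx.
- apply/subsetP => w; rewrite in_setU1 => /orP[/eqP->//|].
  by rewrite in_setD1 => /andP[_ /(subsetP hab)].
Qed.

Lemma E_gen a b h : h \in H -> h \subset cint a b -> (a \in h) || (b \in h) ->
  ~~ hv (cint a b :\: [set a; b]) ->
  exists2 e, e \in H & [&& a \in e, b \in e & e \subset cint a b].
Proof.
move=> hH hab xab light.
have [e [ce ae be eab]] : exists e, [/\ #|e| = r, a \in e, b \in e & e \subset cint a b].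
  case: (boolP (a \in h)) => ah; case: (boolP (b \in h)) => bh.
  - by exists h; split => //; apply: card_e.
  - exact: (swap_e hH hab ah bh (cint_r a b)).
  - have [e [? ? ? ?]] := swap_e hH hab bh ah (cint_l a b); by exists e.
  - by move: xab; rewrite (negbTE ah) (negbTE bh).
case: (boolP (e \in H)) => eH; first by exists e; rewrite ?ae ?be ?eab.
have [p [q [h' [h'H sub dis]]]] := sat_arc ce eH.
have an : a \notin cint p q.
  by move: dis; rewrite disjoints_subset => /subsetP/(_ a ae); rewrite inE.
have bn : b \notin cint p q.
  by move: dis; rewrite disjoints_subset => /subsetP/(_ b be); rewrite inE.
case: (boolP (p \in cint a b)) => pin.
- case/negP: light; apply: (hv_sub (S := cint p q)); first by apply/hvP; exists h'.
  apply/subsetP => x xin; rewrite in_setD in_set2 (AL_in an bn pin xin) andbT negb_or.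
  by apply/andP; split; apply/eqP => ex; [move: an | move: bn]; rewrite -ex xin.
- exfalso; apply: (M1F h'H hH sub).
  rewrite disjoint_sym disjoints_subset; apply/subsetP => x xin; rewrite in_setC.
  apply/negP => xh; move/negP: (AL_out an bn pin xin); apply; exact: (subsetP hab x xh).
Qed.

Lemma lam_char v u : hv (cint u v) -> ~~ hv (cint (ordS u) v) -> lam H v = u.
Proof.
move=> /hvP[h hH hsub] l.
have uh : u \in h.
  have : ~~ (h \subset cint (ordS u) v) by apply: contra l => s; apply/hvP; exists h.
  case/subsetPn => x xh xn; by rewrite -(eqP (G1 (subsetP hsub x xh) xn)).
have [e eH /and3P[ue ve eS]] : exists2 e, e \in H & [&& u \in e, v \in e & e \subset cint u v].
  apply: (E_gen hH hsub); first by rewrite uh.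
  apply: contra l => hl; apply: hv_sub hl _; apply/subsetP => x.
  rewrite in_setD in_set2 negb_or => /andP[/andP[xu _] xin]; exact: G2 xin xu.
have isl : is_lambda H v u.
  apply/andP; split; first by apply/exists_inP; exists e => //; rewrite ve.
  apply/negP => /exists_inP[h' h'H /andP[_ s']]; case/negP: l; apply/hvP; by exists h'.
rewrite /lam; case: pickP => [u' lu'|none]; last by rewrite none in isl.
move: lu' => /andP[/exists_inP[h' h'H /andP[vh' s']] /exists_inP nl'] /=.
case: (ltngtP (cdist u' v) (cdist u v)) => c.
- case/negP: l; apply/hvP; exists h' => //; apply/subsetP => x /(subsetP s').
  exact: G3.
- case: nl'; exists e => //; rewrite ve /=; apply/subsetP => x /(subsetP eS).
  exact: G3.
- by apply/eqP; apply: (G4 c).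
Qed.

Lemma lam_exists v : exists u, hv (cint u v) && ~~ hv (cint (ordS u) v).
Proof.
have n0 : 0 < n by lia.
pose f t := hv (cint (iter t (@ordS n) (ordS v)) v).
have f0 : f 0.
  rewrite /f /= cint_full //.
  have := @NL (ordS v) v; rewrite cint_full // setCT cardsT card_ord (negbTE hv0) orbF.
  by apply; lia.
have fN : ~~ f n.-1.
  rewrite /f; have -> : iter n.-1 (@ordS n) (ordS v) = v.
    apply: val_inj; rewrite /= iter_ordS /= modnDml.
    have -> : v.+1 + n.-1 = v + n by lia.
    by rewrite modnDr modn_small.
  exact: hv1.
have [t /andP[ft nft]] := ivt f0 fN.
by exists (iter t (@ordS n) (ordS v)); apply/andP; split; [exact: ft | exact: nft].
Qed.

Lemma LAM v : hv (cint (lam H v) v) && ~~ hv (cint (ordS (lam H v)) v).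
Proof. by have [u /andP[h1 h2]] := lam_exists v; rewrite (lam_char h1 h2) h1 h2. Qed.

Lemma L1 v : hv (cint (lam H v) v). Proof. by case/andP: (LAM v). Qed.
Lemma L2 v : ~~ hv (cint (ordS (lam H v)) v). Proof. by case/andP: (LAM v). Qed.

Lemma HV a v : hv (cint a v) = (lam H v \in cint a v).
Proof.
case: (boolP (lam H v \in cint a v)) => h.
  apply: hv_sub (L1 v) _; apply/subsetP => x; exact: G5.
apply/negbTE; apply: contra (L2 v) => hh; apply: hv_sub hh _; apply/subsetP => x.
exact: G6.
Qed.

Lemma rho_char v u : hv (cint v u) -> ~~ hv (cint v (ord_pred u)) -> rho H v = u.
Proof.
move=> /hvP[h hH hsub] l.
have uh : u \in h.
  have : ~~ (h \subset cint v (ord_pred u)) by apply: contra l => s; apply/hvP; exists h.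
  case/subsetPn => x xh xn; by rewrite -(eqP (G1' (subsetP hsub x xh) xn)).
have [e eH /and3P[ve ue eS]] : exists2 e, e \in H & [&& v \in e, u \in e & e \subset cint v u].
  apply: (E_gen hH hsub); first by rewrite uh orbT.
  apply: contra l => hl; apply: hv_sub hl _; apply/subsetP => x.
  rewrite in_setD in_set2 negb_or => /andP[/andP[_ xu] xin]; exact: G2' xin xu.
have isr : is_rho H v u.
  apply/andP; split; first by apply/exists_inP; exists e => //; rewrite ve.
  apply/negP => /exists_inP[h' h'H /andP[_ s']]; case/negP: l; apply/hvP; by exists h'.
rewrite /rho; case: pickP => [u' lu'|none]; last by rewrite none in isr.
move: lu' => /andP[/exists_inP[h' h'H /andP[vh' s']] /exists_inP nl'] /=.
case: (ltngtP (cdist v u') (cdist v u)) => c.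
- case/negP: l; apply/hvP; exists h' => //; apply/subsetP => x /(subsetP s').
  exact: G3'.
- case: nl'; exists e => //; rewrite ve /=; apply/subsetP => x /(subsetP eS).
  exact: G3'.
- by apply: (cdist_inj c).
Qed.

Lemma lam_neq v : lam H v != v.
Proof. by apply/negP => /eqP e; have := L1 v; rewrite e (negbTE (hv1 v)). Qed.

Lemma n_gt1 : 1 < n. Proof. lia. Qed.

Lemma lam_neqS v : lam H v != ordS v.
Proof.
apply/negP => /eqP e; have := L2 v; rewrite e dich; last first.
  by apply: contra (ordS_neq v n_gt1) => /eqP/ordS_inj e2; apply/eqP; rewrite -e2.
by rewrite ordSK (negbTE (hv1 _)).
Qed.

Lemma P1' v : hv (cint (ordS v) (lam H v)) && ~~ hv (cint (ordS v) (ord_pred (lam H v))).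
Proof.
apply/andP; split.
  rewrite dich; first by rewrite ordSK L2.
  by apply: contra (lam_neq v) => /eqP/ordS_inj ->.
rewrite dich; first by rewrite oPK oSK L1.
by rewrite oPK lam_neqS.
Qed.

Lemma P1 v : rho H (ordS v) = lam H v.
Proof. by case/andP: (P1' v) => h1 h2; apply: rho_char. Qed.

Lemma P1p i : rho H i = lam H (ord_pred i).
Proof. by rewrite -{1}(ord_predK i) P1. Qed.

Lemma M i : lam H i \in cint (lam H (ord_pred i)) i.
Proof.
rewrite -HV; apply: hv_sub (L1 (ord_pred i)) _; apply/subsetP => x; apply: G7.
by have := lam_neqS (ord_pred i); rewrite ord_predK.
Qed.

Lemma pneq i : lam H (ord_pred i) != i.
Proof. by have := lam_neqS (ord_pred i); rewrite ord_predK. Qed.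

Lemma U i j : j \in cint (lam H (ord_pred i)) (lam H i) ->
  ordS j \in cint (lam H (ord_pred i)) (lam H i) -> lam H j = i.
Proof.
move=> h1 h2; rewrite -P1; apply: rho_char.
  have /andP[g1 g2] := GU (M i) (lam_neq i) (pneq i) (lam_neq _) h1 h2.
  by rewrite HV.
have /andP[g1 g2] := GU (M i) (lam_neq i) (pneq i) (lam_neq _) h1 h2.
by rewrite HV.
Qed.

Lemma U' i z : z \in cint (lam H (ord_pred i)) (lam H i) -> z != lam H i -> lam H z = i.
Proof. move=> h1 h2; have h3 := GU2 (M i) (lam_neq i) h1 h2; exact: U h1 h3. Qed.

Lemma part2 i j : i != j ->
  #|cint (rho H i) (lam H i) :&: cint (rho H j) (lam H j)| <= 1.
Proof.
move=> ij; rewrite !P1p.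
rewrite leqNgt; apply/negP => /card_gt1P [x [y [xin yin xy]]].
move: xin yin; rewrite !in_setI => /andP[xi xj] /andP[yi yj].
have key : forall z, z \in cint (lam H (ord_pred i)) (lam H i) ->
    z \in cint (lam H (ord_pred j)) (lam H j) -> (z == lam H i) || (z == lam H j).
  move=> z zi zj; apply/negPn/negP; rewrite negb_or => /andP[zb zd].
  by move/eqP: ij; apply; rewrite -(U' zi zb) -(U' zj zd).
have ab : lam H (ord_pred i) != lam H i.
  apply/negP => /eqP eab; move: xi yi; rewrite eab cint_id !inE => /eqP ex /eqP ey.
  by rewrite ex ey eqxx in xy.
have cd : lam H (ord_pred j) != lam H j.
  apply/negP => /eqP eab; move: xj yj; rewrite eab cint_id !inE => /eqP ex /eqP ey.
  by rewrite ex ey eqxx in xy.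
have ha : lam H (ord_pred i) \in cint (lam H (ord_pred j)) (lam H j) ->
    lam H (ord_pred i) == lam H j.
  move=> aj; apply/negPn/negP => ad; move/eqP: ij; apply.
  by rewrite -(U' (cint_l _ _) ab) -(U' aj ad).
have hc : lam H (ord_pred j) \in cint (lam H (ord_pred i)) (lam H i) ->
    lam H (ord_pred j) == lam H i.
  move=> ci; apply/negPn/negP => cb; move/eqP: ij; apply.
  by rewrite -(U' ci cb) (U' (cint_l _ _) cd).
have /andP[/eqP ad /eqP cb] := G11 xi xj yi yj xy (key _ xi xj) (key _ yi yj) ha hc.
have := G12 (ord_pred i) ab; case/orP => /andP[zi zb].
- have e1 := U' zi zb.
  have e2 := U' (cint_l _ _) ab; rewrite e1 in e2.
  by move: (lam_neq i); rewrite e2 eqxx.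
- rewrite -cb ad in zi; rewrite ad in zb.
  have e1 := U' zi zb.
  by move: (lam_neq j); rewrite -ad e1 eqxx.
Qed.

Lemma part3 j : exists! i : 'I_n,
  (j \in cint (rho H i) (lam H i)) /\ (ordS j \in cint (rho H i) (lam H i)).
Proof.
exists (lam H j); split.
  rewrite P1p; have /andP[h1 h2] := P1' j; rewrite HV in h1; rewrite HV in h2.
  have /andP[-> ->] := GE (M (lam H j)) h1 h2 (lam_neq j) (lam_neqS j) (pneq _) (lam_neq _).
  by [].
move=> i' [h1 h2]; rewrite P1p in h1 h2; exact: U h1 h2.
Qed.

Lemma part4 i : lam H i != rho H i ->
  lam H (rho H i) = i /\ rho H (rho H i) \in hoint (lam H i) i.
Proof.
rewrite (P1p i) => qp.
have lp : lam H (lam H (ord_pred i)) = i.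
  apply: lam_char.
  - rewrite dich; first by rewrite L2.
    apply: contra (lam_neq (ord_pred i)) => /eqP e; apply/eqP; apply: ordS_inj.
    by rewrite e oPK.
  - rewrite dich; last by apply: contra (pneq i) => /eqP/ordS_inj ->.
    rewrite oSK negbK HV; apply: G2 (M i) _; by rewrite qp.
split => //.
rewrite P1p.
have hx1 : lam H (ord_pred (lam H (ord_pred i))) \in
    cint (lam H i) (ord_pred (lam H (ord_pred i))).
  rewrite -HV; apply: hv_sub (L1 i) _; apply/subsetP => y.
  exact: G9 (M i) qp (pneq i).
have hx2 : lam H (ord_pred (lam H (ord_pred i))) \notin
    cint i (ord_pred (lam H (ord_pred i))).
  rewrite -HV dich; last by rewrite oPK pneq.
  by rewrite oPK negbK L1.
exact: G10 (M i) qp (pneq i) (lam_neq i) hx1 hx2.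
Qed.

Lemma main :
  [/\ (forall i : 'I_n, rho H (ordS i) = lam H i),
      (forall i j : 'I_n, i != j ->
         #|cint (rho H i) (lam H i) :&: cint (rho H j) (lam H j)| <= 1),
      (forall j : 'I_n, exists! i : 'I_n,
         (j \in cint (rho H i) (lam H i)) /\ (ordS j \in cint (rho H i) (lam H i)))
    & (forall i : 'I_n, lam H i != rho H i ->
         lam H (rho H i) = i /\ rho H (rho H i) \in hoint (lam H i) i)].
Proof. split; [exact: P1 | exact: part2 | exact: part3 | exact: part4]. Qed.

End Sat.

Theorem proposition3p5 (r n : nat) (H : {set {set 'I_n}}) :
  2 <= r -> 2 * r <= n -> M1_saturated r H ->
  [/\ (forall i : 'I_n, rho H (ordS i) = lam H i),
      (forall i j : 'I_n, i != j ->
         #|cint (rho H i) (lam H i) :&: cint (rho H j) (lam H j)| <= 1),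
      (forall j : 'I_n, exists! i : 'I_n,
         (j \in cint (rho H i) (lam H i)) /\ (ordS j \in cint (rho H i) (lam H i)))
    & (forall i : 'I_n, lam H i != rho H i ->
         lam H (rho H i) = i /\ rho H (rho H i) \in hoint (lam H i) i)].
Proof. move=> r2 rn sat; exact: main r2 rn sat. Qed.
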